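(* If two ordered forests $\mathcal F,\mathcal F'$ have the same underlying unlabelled rooted forest, then the commutative images $\phi(R_{\mathcal F})$ and $\phi(R_{\mathcal F'})$ (with $\phi:a_{ij}\mapsto x_{ij}$ applied to the realization) are equal. Writing $R^{\overline{\mathcal F}}$ for this common image, where $\overline{\mathcal F}$ is the underlying rooted forest, the elements $R^{\overline{\mathcal F}}$, $\overline{\mathcal F}$ ranging over all rooted forests, form a basis of the (realized) Connes–Kreimer Hopf algebra.
   Context: An ordered forest on $n$ vertices is a rooted forest with vertex set $[n]$ (labels unrelated to the structure); its edge set $E(\mathcal F)$ consists of the pairs $(l,p(l))$, $p$ the parent map. $\mathcal G\le\mathcal F$ iff $E(\mathcal F)\subseteq E(\mathcal G)$ (both on $[n]$). First realization: $A=\{a_{ij}:0\le i<j\}$ with $a_{ij}\prec a_{kl}$ iff $j=k$; $S^{\mathcal F}$ is the sum of words $w_1\cdots w_n$ over $A$ with $w_k\prec w_l$ whenever $k$ is the parent of $l$. $R_{\mathcal F}=\sum_{\mathcal G\le\mathcal F}(-1)^{|E(\mathcal F)|-|E(\mathcal G)|}S^{\mathcal G}$. $\phi$ sends $a_{ij}$ to commuting indeterminates $x_{ij}$; $\phi(S^{\mathcal F})$ depends only on the underlying rooted forest, and the span of the $\phi(S^{\mathcal F})$ is a realization of the Connes–Kreimer Hopf algebra, in which $\phi(S^{\mathcal F})$ for distinct underlying rooted forests are linearly independent. *)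

(* Defs.v *)
From HB Require Import structures.
From mathcomp Require Import all_boot all_order all_algebra.
Set Implicit Arguments. Unset Strict Implicit. Unset Printing Implicit Defensive.
Import GRing.Theory.

(* Letters a_ij of the alphabet A, encoded as pairs (i,j); a genuine letter has i < j. *)
Definition letter := (nat * nat)%type.
Definition is_letter (a : letter) : bool := a.1 < a.2.
Definition prec (a b : letter) : bool := a.2 == b.1.

(* A parent map on the vertex set [n] (encoded as 'I_n); None = root. *)
Definition pmap_n (n : nat) := {ffun 'I_n -> option 'I_n}.

Definition is_forest n (p : pmap_n n) : bool :=
  [forall x : 'I_n, iter n (fun o => obind (fun y => p y) o) (Some x) == None].

Definition nedges n (p : pmap_n n) : nat := #|[pred l : 'I_n | p l != None]|.

Definition forest_le n (G F : pmap_n n) : bool :=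
  [forall l : 'I_n, forall k : 'I_n, (F l == Some k) ==> (G l == Some k)].

(* Coefficient of the commutative monomial given by the multiset m (a sequence of
   letters, read up to permutation) in phi(S^F): the number of words w_1...w_n over A
   whose multiset of letters is m and with w_k ≺ w_l whenever k is the parent of l.
   Words are indexed by the vertices of the forest. *)
Definition S_coef n (p : pmap_n n) (m : seq letter) : nat :=
  if (size m == n) && all is_letter m then
    count (fun w : seq letter =>
             [forall l : 'I_n, forall k : 'I_n,
                 (p l == Some k) ==> prec (nth (0,0) w k) (nth (0,0) w l)])
          (permutations m)
  else 0.

(* Coefficient of monomial m in phi(R_F). *)
Definition R_coef n (F : pmap_n n) (m : seq letter) : int :=
  (\sum_(G : pmap_n n | is_forest G && forest_le G F)
     ((-1) ^+ (nedges G - nedges F) * (S_coef G m)%:Z))%R.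

Definition OF := {n : nat & pmap_n n}.
Definition OF_forest (x : OF) : bool := is_forest (projT2 x).

(* Same underlying unlabelled rooted forest: an isomorphism of rooted forests. *)
Definition forest_iso (x y : OF) : Prop :=
  exists g : 'I_(projT1 x) -> 'I_(projT1 y),
    bijective g /\ forall l, projT2 y (g l) = omap g (projT2 x l).

(* Series over K in the commuting variables x_ij, given by coefficient functions on
   monomials (multisets of letters encoded as sequences). *)
Definition series (K : fieldType) := seq letter -> K.
Definition phiS (K : fieldType) (x : OF) : series K :=
  fun m => ((S_coef (projT2 x) m)%:R)%R.
Definition phiR (K : fieldType) (x : OF) : series K :=
  fun m => ((R_coef (projT2 x) m)%:~R)%R.

Definition in_span (K : fieldType) (gen : OF -> series K) (f : series K) : Prop :=
  exists (k : nat) (t : 'I_k -> OF) (c : 'I_k -> K),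
    (forall i, OF_forest (t i)) /\
    forall m, (f m = \sum_(i < k) c i * gen (t i) m)%R.

(* Main.v *)
Require Import Defs.
From HB Require Import structures.
From mathcomp Require Import all_boot all_order all_algebra.
Set Implicit Arguments. Unset Strict Implicit. Unset Printing Implicit Defensive.
Import GRing.Theory Num.Theory.
Local Open Scope ring_scope.

Section Basics.
Variable n : nat.
Implicit Types (A B H G F : pmap_n n).

Lemma leP G F : reflect (forall l k, F l = Some k -> G l = Some k) (forest_le G F).
Proof.
apply: (iffP forallP) => [h l k /eqP Fl | h l]; first by apply/eqP; move/forallP: (h l) => /(_ k) /implyP; apply.
by apply/forallP => k; apply/implyP => /eqP /h ->.
Qed.

Lemma le_refl F : forest_le F F.
Proof. by apply/leP. Qed.

Lemma le_trans A B H : forest_le A B -> forest_le B H -> forest_le A H.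
Proof. by move=> /leP h1 /leP h2; apply/leP => l k /h2 /h1. Qed.

Lemma le_anti A B : forest_le A B -> forest_le B A -> A = B.
Proof.
move=> /leP h1 /leP h2; apply/ffunP => l.
case eB: (B l) => [k|]; first by rewrite (h1 _ _ eB).
by case eA: (A l) => [k|] //; rewrite (h2 _ _ eA) in eB.
Qed.

Lemma nedges_le A B : forest_le A B -> (nedges B <= nedges A)%N.
Proof.
move=> /leP h; apply: subset_leq_card; apply/subsetP => l; rewrite !inE.
by case eB: (B l) => [k|] //; rewrite (h _ _ eB).
Qed.

Definition step (p : pmap_n n) (o : option 'I_n) := obind (fun y => p y) o.

Lemma iter_None p j : iter j (step p) None = None.
Proof. by elim: j => //= j ->. Qed.

Lemma forest_sub A B : is_forest A -> forest_le A B -> is_forest B.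
Proof.
move=> /forallP fA /leP h; apply/forallP => x.
have key : forall j, iter j (step B) (Some x) = None \/ iter j (step B) (Some x) = iter j (step A) (Some x).
  elim=> [|j IH]; first by right.
  rewrite /= -/(step B) -/(step A) in IH *.
  case: IH => [-> | ->]; first by left.
  case: (iter j (step A) (Some x)) => [y|] /=; last by left.
  case eB: (B y) => [z|]; [right; by rewrite (h _ _ eB) | by left].
have := fA x; rewrite -/(step A) => /eqP eA.
by case: (key n) => ->; rewrite ?eA.
Qed.

Definition compat (H : pmap_n n) (w : seq letter) : bool :=
  [forall l : 'I_n, forall k : 'I_n,
     (H l == Some k) ==> prec (nth (0,0) w k) (nth (0,0) w l)].

Lemma compatP H w : reflect (forall l k, H l = Some k -> prec (nth (0,0) w k) (nth (0,0) w l)) (compat H w).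
Proof.
apply: (iffP forallP) => [h l k /eqP Fl | h l]; first by move/forallP: (h l) => /(_ k) /implyP; apply.
by apply/forallP => k; apply/implyP => /eqP /h.
Qed.

Lemma compat_forest H w : size w = n -> all is_letter w -> compat H w -> is_forest H.
Proof.
move=> sw /allP hl /compatP hc.
pose phi (l : 'I_n) := (nth (0,0) w l).2.
have dec : forall l k, H l = Some k -> (phi k < phi l)%N.
  move=> l k e; have := hc _ _ e; rewrite /prec /phi => /eqP ->.
  by apply: hl; apply: mem_nth; rewrite sw.
apply/forallP => x; apply/eqP; rewrite -/(step H).
case eN: (iter n (step H) (Some x)) => [y|] //.
have nN : forall j, (j <= n)%N -> iter j (step H) (Some x) != None.
  move=> j le; apply/negP => /eqP ej.
  by have := iterD (n - j) j (step H) (Some x); rewrite subnK // ej iter_None eN.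
pose g j := odflt x (iter j (step H) (Some x)).
have st : forall j, (j < n)%N -> (phi (g j.+1) < phi (g j))%N.
  move=> j lt; have := nN j (ltnW lt); have := nN j.+1 lt.
  rewrite /g iterS -/(step H); case: (iter j (step H) (Some x)) => [z|] //= .
  by case eH: (H z) => [u|] //= _ _; apply: dec eH.
have ch : forall i d, (i + d.+1 <= n)%N -> (phi (g (i + d.+1)) < phi (g i))%N.
  move=> i; elim=> [|d IH] le; first by rewrite addn1; apply: st; rewrite -addn1.
  apply: ltn_trans (IH _) ; last by rewrite addnS in le; apply: ltnW.
  by rewrite addnS; apply: st; rewrite -addnS.
pose f (j : 'I_n.+1) : 'I_n := g j.
have finj : injective f.
  move=> a b; rewrite /f => eab; apply/val_inj => /=.
  case: (ltngtP a b) => // [ab|ba].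
  - have := ch a (b - a).-1; rewrite prednK ?subn_gt0 // subnKC ?(ltnW ab) // -ltnS (ltn_ord b).
    by rewrite eab ltnn => /(_ isT).
  - have := ch b (a - b).-1; rewrite prednK ?subn_gt0 // subnKC ?(ltnW ba) // -ltnS (ltn_ord a).
    by rewrite eab ltnn => /(_ isT).
by have := @leq_card _ _ f finj; rewrite !card_ord ltnn.
Qed.
End Basics.

Lemma sgn_step (a b : nat) : (a <= b)%N -> (-1:int)^+(b.+1 - a) = - (-1)^+(b - a).
Proof. by move=> le; rewrite subSn // exprS mulN1r. Qed.

Lemma int_eq_opp0 (S : int) : S = - S -> S = 0.
Proof. move=> e; apply/eqP; have : S *+ 2 == 0 by rewrite mulr2n {2}e subrr. by rewrite mulrn_eq0. Qed.

Section Alt.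
Variables (n : nat) (A B : pmap_n n).
Hypothesis hBA : forest_le B A.

Let P (H : pmap_n n) := forest_le H A && forest_le B H.

Lemma P_eq (H : pmap_n n) : A = B -> P H = (H == A).
Proof.
move=> eAB; rewrite /P -eAB; apply/idP/eqP => [/andP [h1 h2] | ->]; last by rewrite le_refl.
exact: le_anti.
Qed.

Variables (l0 k0 : 'I_n).
Hypotheses (hA0 : A l0 = None) (hB0 : B l0 = Some k0).

Definition tog (H : pmap_n n) : pmap_n n :=
  [ffun l => if l == l0 then (if H l0 == None then Some k0 else if H l0 == Some k0 then None else H l0) else H l].

Lemma togK : cancel tog tog.
Proof.
move=> H; apply/ffunP => l; rewrite !ffunE; case: eqP => [->|//].
rewrite eqxx; case e: (H l0) => [u|] /=; last by rewrite eqxx.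
case: (eqVneq u k0) => [->|ne]; first by rewrite eqxx.
have ne' : (Some u == Some k0) = false by apply/eqP => -[/eqP]; rewrite (negbTE ne).
by rewrite ne' /= ne'.
Qed.

Lemma P_vals (H : pmap_n n) : P H -> H l0 = None \/ H l0 = Some k0.
Proof.
case/andP=> _ /leP h; case e: (H l0) => [u|]; [right|by left].
by move: (h _ _ e); rewrite hB0 => -[->].
Qed.

Lemma P_tog (H : pmap_n n) : P H -> P (tog H).
Proof.
move=> hP; have hv := P_vals hP; case/andP: hP => /leP h1 /leP h2.
apply/andP; split; apply/leP => l k.
- move=> eA; have ne : l != l0 by apply/eqP => el; rewrite el hA0 in eA.
  by rewrite ffunE (negbTE ne); apply: h1.
- rewrite ffunE; case: eqP => [el|_]; last by apply: h2.
  subst l; case: hv => ->; first by rewrite eqxx => -[<-].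
  by rewrite /= eqxx.
Qed.

Lemma P_togE (H : pmap_n n) : P (tog H) = P H.
Proof.
apply/idP/idP; last exact: P_tog.
by move=> /P_tog; rewrite togK.
Qed.

Lemma nedges_tog (H : pmap_n n) :
  (nedges (tog H) + (H l0 != None) = nedges H + (tog H l0 != None))%N.
Proof.
have eD : #|[predD1 [pred l | tog H l != None] & l0]| = #|[predD1 [pred l | H l != None] & l0]|.
  apply: eq_card => l; rewrite !inE; case: eqP => //= ne.
  by rewrite ffunE (introF eqP ne).
rewrite /nedges (cardD1 l0 [pred l | tog H l != None]) (cardD1 l0 [pred l | H l != None]) eD !inE.
idtac.
by rewrite addnAC [RHS]addnAC; congr (_ + _)%N; apply: addnC.
Qed.

Lemma sum_P_zero (f : pmap_n n -> int) :
  (forall H, P H -> f (tog H) = - f H) -> \sum_(H | P H) f H = 0.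
Proof.
move=> hf; apply: int_eq_opp0.
rewrite {1}(reindex_inj (can_inj togK)) /= -sumrN.
apply: eq_big => [H|H]; first (by move: (P_togE H)).
by rewrite P_togE => /hf.
Qed.

Lemma edge_cases (H : pmap_n n) : P H ->
  (nedges (tog H) = (nedges H).+1) \/ (nedges H = (nedges (tog H)).+1).
Proof.
move=> hP; have := nedges_tog H; rewrite ffunE eqxx.
case: (P_vals hP) => -> /=; rewrite ?eqxx /=.
- by rewrite addn0 addn1 => ->; left.
- by rewrite addn0 addn1 => <-; right.
Qed.

Lemma alt1_ne : \sum_(H | P H) (-1:int)^+(nedges H - nedges A) = 0.
Proof.
apply: sum_P_zero => H hP.
have hA1 : (nedges A <= nedges H)%N by apply: nedges_le; case/andP: hP.
have hA2 : (nedges A <= nedges (tog H))%N by apply: nedges_le; case/andP: (P_tog hP).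
case: (edge_cases hP) => ->; first by rewrite sgn_step.
by rewrite sgn_step ?opprK.
Qed.

Lemma alt2_ne : \sum_(H | P H) (-1:int)^+(nedges B - nedges H) = 0.
Proof.
apply: sum_P_zero => H hP.
have hB1 : (nedges H <= nedges B)%N by apply: nedges_le; case/andP: hP.
have hB2 : (nedges (tog H) <= nedges B)%N by apply: nedges_le; case/andP: (P_tog hP).
case: (edge_cases hP) => e; rewrite e in hB1 hB2 *.
- by rewrite -(subnSK hB2) exprS mulN1r opprK.
- by rewrite -(subnSK hB1) exprS mulN1r.
Qed.
End Alt.

Lemma alt_witness n (A B : pmap_n n) : forest_le B A -> A != B ->
  exists l0 k0, A l0 = None /\ B l0 = Some k0.
Proof.
move=> /leP h ne; case: (pickP (fun l => A l != B l)) => [l0 /eqP hl | hall]; last first.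
  by case/eqP: ne; apply/ffunP => l; move: (hall l) => /negbFE /eqP.
exists l0; case eA: (A l0) hl => [k|] /= hl; first by case: hl; rewrite (h _ _ eA).
by case: (B l0) hl => [k0|] // _; exists k0.
Qed.

Lemma alt1 n (A B : pmap_n n) : forest_le B A ->
  \sum_(H | forest_le H A && forest_le B H) (-1:int)^+(nedges H - nedges A) = (A == B)%:R.
Proof.
move=> hBA; case: (eqVneq A B) => [eAB|ne].
  by rewrite (eq_bigl _ _ (fun H => P_eq H eAB)) big_pred1_eq subnn expr0.
have [l0 [k0 [h1 h2]]] := alt_witness hBA ne.
exact: (alt1_ne h1 h2).
Qed.

Lemma alt2 n (A B : pmap_n n) : forest_le B A ->
  \sum_(H | forest_le H A && forest_le B H) (-1:int)^+(nedges B - nedges H) = (A == B)%:R.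
Proof.
move=> hBA; case: (eqVneq A B) => [eAB|ne].
  by rewrite (eq_bigl _ _ (fun H => P_eq H eAB)) big_pred1_eq eAB subnn expr0.
have [l0 [k0 [h1 h2]]] := alt_witness hBA ne.
exact: (alt2_ne h1 h2).
Qed.

Lemma count_int (T : Type) (a : pred T) (s : seq T) :
  ((count a s)%:Z = \sum_(w <- s) (a w : nat)%:Z)%R.
Proof. by elim: s => [|x s IH]; rewrite ?big_nil ?big_cons //= PoszD IH. Qed.

Definition rr n (F : pmap_n n) (w : seq letter) : int :=
  \sum_(H | forest_le H F && compat H w) (-1)^+(nedges H - nedges F).

Definition cond n (m : seq letter) := (size m == n) && all is_letter m.

Lemma S_coefE n (G : pmap_n n) m : S_coef G m = if cond n m then count (compat G) (permutations m) else 0%N.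
Proof. by []. Qed.

Lemma mem_perm_props n m w : cond n m -> w \in permutations m -> size w = n /\ all is_letter w.
Proof.
move=> /andP [/eqP sm am]; rewrite mem_permutations => pw.
by rewrite (perm_size pw) (perm_all _ pw).
Qed.

Lemma R_coef_words n (F : pmap_n n) m :
  R_coef F m = if cond n m then \sum_(w <- permutations m) rr F w else 0.
Proof.
rewrite /R_coef; case c: (cond n m); last first.
  by apply: big1 => G _; rewrite S_coefE c mulr0.
under eq_bigr => G _ do rewrite S_coefE c count_int mulr_sumr.
rewrite exchange_big /=; apply: eq_big_seq => w wP.
have [sw aw] := mem_perm_props c wP.
rewrite /rr big_mkcond [RHS]big_mkcond /=; apply: eq_bigr => G _.
case cG: (compat G w); last by rewrite andbF; case: ifP; rewrite ?mulr0.
by rewrite (compat_forest sw aw cG) andbT /= mulr1.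
Qed.

Lemma natz_intr (K : fieldType) (k : nat) : ((k%:Z)%:~R : K) = k%:R.
Proof. by rewrite -pmulrn. Qed.

Lemma span_of (K : fieldType) n (P : pred (pmap_n n)) (gen : OF -> series K) (f : series K)
  (d : pmap_n n -> K) :
  (forall G, P G -> is_forest G) ->
  (forall m, f m = \sum_(G | P G) d G * gen (existT _ n G) m) -> in_span gen f.
Proof.
move=> hP hf; exists #|P|, (fun i => existT _ n (enum_val i)), (fun i => d (enum_val i)).
split; first by move=> i; apply: hP; have := enum_valP i.
by move=> m; rewrite hf (big_enum_val (A := P) (fun G => d G * gen (existT _ n G) m)).
Qed.

Lemma part2 (K : fieldType) (x : OF) : OF_forest x -> in_span (@phiS K) (phiR K x).
Proof.
case: x => n p /= fp.
apply: (@span_of K n (fun G => is_forest G && forest_le G p) _ _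
  (fun G => ((-1:int)^+(nedges G - nedges p))%:~R)); first by move=> G /andP [].
move=> m; rewrite /phiR /R_coef /= rmorph_sum; apply: eq_bigr => G _.
by rewrite rmorphM /phiS /= natz_intr.
Qed.

Lemma S_as_R n (p : pmap_n n) m : is_forest p ->
  (S_coef p m)%:Z = \sum_(G | is_forest G && forest_le G p) R_coef G m.
Proof.
move=> fp; rewrite /R_coef.
rewrite (exchange_big_dep (fun H => is_forest H && forest_le H p)) /=; last first.
  by move=> G H /andP [_ h1] /andP [-> h2] /=; apply: le_trans h2 h1.
rewrite (bigD1 p) /=; last by rewrite fp le_refl.
rewrite -big_distrl /= (eq_bigl (fun G => forest_le G p && forest_le p G)); last first.
  move=> G /=; apply/idP/idP => [/and3P[/andP[_ ->] _ ->] // | /andP [h1 h2]].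
  by rewrite (forest_sub fp h2) h1 fp h2.
rewrite alt2 ?le_refl // eqxx mul1r big1 ?addr0 //.
move=> H /andP [/andP [fH lHp] neH].
rewrite -big_distrl /= (eq_bigl (fun G => forest_le G p && forest_le H G)); last first.
  move=> G /=; apply/idP/idP => [/and3P[/andP[_ ->] _ ->] // | /andP [h1 h2]].
  by rewrite (forest_sub fH h2) h1 fH h2.
by rewrite alt2 // eq_sym (negbTE neH) mul0r.
Qed.

Lemma part3 (K : fieldType) (x : OF) : OF_forest x -> in_span (@phiR K) (phiS K x).
Proof.
case: x => n p /= fp.
apply: (@span_of K n (fun G => is_forest G && forest_le G p) _ _ (fun G => 1)); first by move=> G /andP [].
move=> m; rewrite /phiS /phiR /= -natz_intr S_as_R // rmorph_sum; apply: eq_bigr => G _.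
by rewrite mul1r.
Qed.

Section Indep.
Variable n : nat.
Variable F : pmap_n n.
Hypothesis fF : is_forest F.

Definition depthN (N : nat) (v : 'I_n) : nat :=
  (\sum_(j < N) (iter j.+1 (step F) (Some v) != None))%N.

Lemma depthN_eq N1 N2 v : N1 = N2 -> depthN N1 v = depthN N2 v.
Proof. by move=> ->. Qed.

Lemma depthN_rec N l k : F l = Some k -> iter N.+1 (step F) (Some k) = None ->
  depthN N.+1 l = (depthN N.+1 k).+1.
Proof.
move=> e eN; rewrite /depthN.
under eq_bigr => j _ do rewrite iterSr /= e.
rewrite [LHS]big_ord_recl [in RHS]big_ord_recr /=; move: eN => /= ->; rewrite addn0 add1n.
by [].
Qed.

Definition depth v := depthN n v.

Lemma depth_edge l k : F l = Some k -> depth l = (depth k).+1.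
Proof.
move=> e; have n0 : (0 < n)%N by apply: leq_ltn_trans (ltn_ord l).
have en : n = n.-1.+1 by rewrite prednK.
rewrite /depth !(depthN_eq _ en); apply: depthN_rec => //.
rewrite -en; apply/eqP; move/forallP: fF => /(_ k) //.
Qed.

Definition cl (v : 'I_n) : nat := (depth v * n + v).+1.

Lemma cl_inj : injective cl.
Proof.
move=> a b [] e; apply/val_inj => /=.
have := congr1 (modn^~ n) e; rewrite !modnMDl !modn_small //.
Qed.

Lemma cl_edge l k : F l = Some k -> (cl k < cl l)%N.
Proof.
move=> e; rewrite /cl ltnS (depth_edge e).
apply: (@leq_trans (depth k * n + n)); first by rewrite ltn_add2l ltn_ord.
by rewrite mulSn addnC leq_addr.
Qed.

Definition lab (v : 'I_n) : letter := (if F v is Some k then cl k else 0%N, cl v).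

Definition mF : seq letter := [seq lab v | v <- enum 'I_n].

Lemma cond_mF : cond n mF.
Proof.
rewrite /cond size_map size_enum_ord eqxx /=; apply/allP => x /mapP [v _ ->].
rewrite /is_letter /lab /=; case e: (F v) => [k|] //; exact: cl_edge.
Qed.

Lemma uniq_snd_mF : uniq (map snd mF).
Proof.
by rewrite -map_comp (map_inj_uniq (f := snd \o lab)) ?enum_uniq // => a b /= /cl_inj.
Qed.

Section Word.
Variable w : seq letter.
Hypothesis wP : w \in permutations mF.

Lemma size_w : size w = n.
Proof. by have [] := mem_perm_props cond_mF wP. Qed.

Lemma snd_inj (k k' : 'I_n) : (nth (0,0) w k).2 = (nth (0,0) w k').2 -> k = k'.
Proof.
move=> e; apply/val_inj => /=; apply/eqP.
have pw : perm_eq (map snd w) (map snd mF) by apply: perm_map; rewrite -mem_permutations.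
have uw : uniq (map snd w) by rewrite (perm_uniq pw) uniq_snd_mF.
rewrite -(nth_uniq 0%N _ _ uw) ?size_map ?size_w ?ltn_ord //.
by rewrite !(nth_map (0,0)) ?size_w ?ltn_ord // e.
Qed.

Definition Cw : pmap_n n := [ffun l : 'I_n => [pick k : 'I_n | (nth (0,0) w k).2 == (nth (0,0) w l).1]].

Lemma compat_C (H : pmap_n n) : compat H w = forest_le Cw H.
Proof.
apply/compatP/leP => h l k e.
- rewrite ffunE; case: pickP => [k' /eqP e'|none].
    by congr Some; apply: snd_inj; rewrite e'; apply/esym/eqP; apply: h e.
  by have := none k; move: (h _ _ e); rewrite /prec => ->.
- by have := h _ _ e; rewrite ffunE; case: pickP => // k' hk [<-].
Qed.

Lemma rr_C (H : pmap_n n) : rr H w = (H == Cw)%:R.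
Proof.
rewrite /rr; under eq_bigl => X do rewrite compat_C.
case: (boolP (forest_le Cw H)) => hle; first exact: alt1.
rewrite big_pred0; last first.
  move=> X; apply/negP => /andP [h1 h2]; case/negP: hle; exact: le_trans h2 h1.
by case: eqP => // eH; rewrite eH le_refl in hle.
Qed.

Definition sig (l : 'I_n) : 'I_n := odflt l [pick v | lab v == nth (0,0) w l].

Lemma lab_sig l : lab (sig l) = nth (0,0) w l.
Proof.
rewrite /sig; case: pickP => [v /eqP //|none].
have : nth (0,0) w l \in mF.
  by rewrite -(perm_mem (_ : perm_eq w mF)) ?mem_nth ?size_w // -mem_permutations.
by case/mapP => v _ e; have := none v; rewrite e eqxx.
Qed.

Lemma sig_inj : injective sig.
Proof. by move=> a b e; apply: snd_inj; rewrite -!lab_sig e. Qed.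

Lemma sig_iso l : F (sig l) = omap sig (Cw l).
Proof.
have [sinv sK Ks] := injF_bij sig_inj.
rewrite ffunE; case: pickP => [k /eqP e | none] /=.
- move: e; rewrite -(lab_sig k) -(lab_sig l) /lab /=.
  case: (F (sig l)) => [u|] /=; first by move/cl_inj ->.
  by rewrite /cl => /eqP.
- case e: (F (sig l)) => [u|] //.
  by have := none (sinv u); rewrite -!lab_sig /lab /= e Ks eqxx.
Qed.
End Word.

Lemma R_mF (H : pmap_n n) : R_coef H mF = (count (fun w => H == Cw w) (permutations mF))%:Z.
Proof.
rewrite R_coef_words cond_mF count_int; apply: eq_big_seq => w wP.
by rewrite (rr_C wP); case: (H == Cw w).
Qed.

Lemma R_mF_iso (H : pmap_n n) : R_coef H mF != 0 ->
  exists g : 'I_n -> 'I_n, bijective g /\ forall l, F (g l) = omap g (H l).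
Proof.
rewrite R_mF; case: (boolP (has (fun w => H == Cw w) (permutations mF))) => [/hasP [w wP /eqP ->] _|].
  by exists (sig w); split; [apply: injF_bij; apply: sig_inj | apply: sig_iso].
by rewrite has_count -leqNgt leqn0 => /eqP ->.
Qed.

Lemma nth_mF (l : 'I_n) : nth (0,0) mF l = lab l.
Proof. by rewrite (nth_map l) ?size_enum_ord // nth_ord_enum. Qed.

Lemma R_mF_pos : R_coef F mF != 0.
Proof.
have mP : mF \in permutations mF by rewrite mem_permutations.
rewrite R_mF; apply/eqP => /eqP; rewrite eqz_nat -leqn0 leqNgt -has_count => /negP; apply.
apply/hasP; exists mF => //; apply/eqP/ffunP => l.
have sid : forall v, sig mF v = v.
  by move=> v; apply: cl_inj; move: (lab_sig mP v); rewrite nth_mF => /(congr1 snd).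
have := sig_iso mP l; rewrite sid => ->.
by case: (Cw mF l) => //= u; rewrite sid.
Qed.
End Indep.

Lemma R_nonzero_iso (y : OF) n (F : pmap_n n) : is_forest F ->
  R_coef (projT2 y) (mF F) != 0 -> forest_iso y (existT _ n F).
Proof.
case: y => n' p fF /= hR.
have e : n' = n.
  move: hR; rewrite R_coef_words; case c: (cond n' (mF F)); last by rewrite eqxx.
  by move: c; rewrite /cond size_map size_enum_ord => /andP [/eqP].
subst n'; have [g [bg hg]] := R_mF_iso fF hR.
by exists g.
Qed.

Lemma part4 (K : fieldType) (HK : [pchar K] =i pred0) (k : nat) (t : 'I_k -> OF) (c : 'I_k -> K) :
  (forall i, OF_forest (t i)) ->
  (forall i j, forest_iso (t i) (t j) -> i = j) ->
  (forall m, \sum_(i < k) c i * phiR K (t i) m = 0) ->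
  forall i, c i = 0.
Proof.
move=> ft niso hs i0; case ex: (t i0) => [n F].
have fF : is_forest F by have := ft i0; rewrite ex.
have := hs (mF F); rewrite (bigD1 i0) //= big1 ?addr0; last first.
  move=> i ne; case: (eqVneq (R_coef (projT2 (t i)) (mF F)) 0) => [e|ne0].
    by rewrite /phiR e mulr0.
  by have := niso i i0; rewrite ex => /(_ (R_nonzero_iso fF ne0)) ei; rewrite ei eqxx in ne.
rewrite ex /phiR /= R_mF // -pmulrn => /eqP; rewrite mulf_eq0 => /orP [/eqP //|].
have := R_mF_pos fF; rewrite R_mF // eqz_nat => /negbTE.
by move/pcharf0P: HK => -> ->.
Qed.

Section Relab.
Variable n : nat.
Variables g gi : 'I_n -> 'I_n.
Hypotheses (gK : cancel g gi) (giK : cancel gi g).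

Definition relab (w : seq letter) : seq letter := [seq nth (0,0) w (gi j) | j <- enum 'I_n].

Lemma nth_relab w (j : 'I_n) : nth (0,0) (relab w) j = nth (0,0) w (gi j).
Proof. by rewrite (nth_map j) ?size_enum_ord // nth_ord_enum. Qed.

Definition Hg (H : pmap_n n) : pmap_n n := [ffun j => omap g (H (gi j))].
Definition Hgi (H : pmap_n n) : pmap_n n := [ffun j => omap gi (H (g j))].

Lemma HgK : cancel Hg Hgi.
Proof.
move=> H; apply/ffunP => l; rewrite !ffunE gK.
by case: (H l) => //= u; rewrite gK.
Qed.

Lemma Hg_le A B : forest_le (Hg A) (Hg B) = forest_le A B.
Proof.
apply/leP/leP => h l k.
- move=> eB; have := h (g l) (g k); rewrite !ffunE gK eB /= => /(_ erefl).
  by case: (A l) => //= u [/(can_inj gK) ->].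
- rewrite !ffunE; case eB: (B (gi l)) => [u|] //= [<-].
  by rewrite (h _ _ eB).
Qed.

Lemma Hg_compat H w : compat (Hg H) (relab w) = compat H w.
Proof.
apply/compatP/compatP => h l k.
- move=> eH; have := h (g l) (g k); rewrite !ffunE gK eH /= !nth_relab !gK.
  by apply.
- rewrite ffunE; case eH: (H (gi l)) => [u|] //= [<-].
  by rewrite !nth_relab gK; apply: h.
Qed.

Lemma Hg_nedges H : nedges (Hg H) = nedges H.
Proof.
rewrite /nedges -!sum1_card (reindex_inj (can_inj gK)) /=.
by apply: eq_bigl => l; rewrite !inE ffunE gK; case: (H l).
Qed.

Lemma rr_relab p w : rr (Hg p) (relab w) = rr p w.
Proof.
rewrite /rr (reindex_inj (can_inj HgK)) /=.
by apply: eq_big => H; rewrite ?Hg_le ?Hg_compat // => _; rewrite !Hg_nedges.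
Qed.

Lemma relab_perm w : size w = n -> perm_eq (relab w) w.
Proof.
move=> sw.
have -> : relab w = [seq nth (0,0) w i | i <- [seq val (gi j) | j <- enum 'I_n]] by rewrite -map_comp.
rewrite -{2}(mkseq_nth (0,0) w) /mkseq sw; apply: perm_map.
rewrite -val_enum_ord (map_comp val gi); apply: perm_map.
apply: uniq_perm; rewrite ?enum_uniq ?(map_inj_uniq (can_inj giK)) ?enum_uniq //.
by move=> j; rewrite mem_enum; apply/mapP; exists (g j); rewrite ?mem_enum ?giK.
Qed.

Lemma relab_inj w1 w2 : size w1 = n -> size w2 = n -> relab w1 = relab w2 -> w1 = w2.
Proof.
move=> s1 s2 e; apply: (eq_from_nth (x0 := (0,0))); first by rewrite s1 s2.
move=> i; rewrite s1 => lt.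
by rewrite -[i]/(val (Ordinal lt)) -(gK (Ordinal lt)) -!nth_relab e.
Qed.

Lemma R_relab p m : R_coef p m = R_coef (Hg p) m.
Proof.
rewrite !R_coef_words; case c: (cond n m) => //.
under eq_bigr do rewrite -rr_relab.
rewrite -(big_map relab xpredT); apply: perm_big.
have u1 : uniq [seq relab w | w <- permutations m].
  rewrite map_inj_in_uniq ?permutations_uniq // => w1 w2 h1 h2.
  by apply: relab_inj; [case: (mem_perm_props c h1) | case: (mem_perm_props c h2)].
apply: uniq_perm => //; first exact: permutations_uniq.
have sub : {subset [seq relab w | w <- permutations m] <= permutations m}.
  move=> x /mapP [w wP ->]; rewrite mem_permutations.
  have [sw _] := mem_perm_props c wP.
  by apply: perm_trans (relab_perm sw) _; rewrite -mem_permutations.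
have [] := uniq_min_size u1 sub; last by [].
by rewrite size_map.
Qed.
End Relab.

Lemma part1 (x y : OF) : forest_iso x y -> forall m, R_coef (projT2 x) m = R_coef (projT2 y) m.
Proof.
case: x => n p; case: y => n' q /= [g [bg hg]] m.
have e : n = n' by have := bij_eq_card bg; rewrite !card_ord.
subst n'; case: bg => gi gK giK.
have -> : q = Hg g gi p by apply/ffunP => j; rewrite ffunE -{1}(giK j) hg.
exact: R_relab.
Qed.

Unset Implicit Arguments.

Theorem mainTheorem10 (K : fieldType) (HK : [pchar K] =i pred0) :
  (* well-definedness: phi(R_F) depends only on the underlying rooted forest *)
  (forall x y : OF, OF_forest x -> OF_forest y -> forest_iso x y ->
     forall m, R_coef (projT2 x) m = R_coef (projT2 y) m)
  /\
  (* each R^F lies in the realized Connes-Kreimer algebra span{phi(S^F)} *)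
  (forall x : OF, OF_forest x -> in_span (@phiS K) (phiR K x))
  /\
  (* the R^F span it *)
  (forall x : OF, OF_forest x -> in_span (@phiR K) (phiS K x))
  /\
  (* linear independence of R^F over pairwise non-isomorphic forests *)
  (forall (k : nat) (t : 'I_k -> OF) (c : 'I_k -> K),
     (forall i, OF_forest (t i)) ->
     (forall i j, forest_iso (t i) (t j) -> i = j) ->
     (forall m, \sum_(i < k) c i * phiR K (t i) m = 0) ->
     forall i, c i = 0).
Proof.
split; first by move=> x y _ _; exact: part1.
split; first exact: part2.
split; first exact: part3.
exact: part4.
Qed.
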